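(* Let $G=(V,E)$ be a graph, let $k$ be a nonnegative integer, and let $\mathcal{M}$ be a nontrivial, unbounded graph matroid family with rank function $r$, dimensionality $d$, and threshold $t$. If $G$ is $k$-connected, $k$-vertex-redundantly $\mathcal{M}$-rigid, and has at least $k+t$ vertices, then $\mathcal{M}(G)$ is vertically $(k+1)$-connected.
   Context: All graphs are finite and simple and have no isolated vertices. A graph matroid family $\mathcal{M}$ assigns to every graph $G$ a matroid $\mathcal{M}(G)$ on $E(G)$ such that (i) every graph isomorphism $V(G)\to V(H)$ induces an isomorphism $\mathcal{M}(G)\to\mathcal{M}(H)$, and (ii) for every subgraph $H$ of $G$, $\mathcal{M}(H)$ is the restriction of $\mathcal{M}(G)$ to $E(H)$. $r(G)$ is the rank of $\mathcal{M}(G)$. $G$ is $\mathcal{M}$-rigid if $r(G)=r(K_{V(G)})$; it is $k$-vertex-redundantly $\mathcal{M}$-rigid if it is $\mathcal{M}$-rigid and remains so after deleting any set of at most $k$ vertices. $\mathcal{M}$ is nontrivial if some graph $G$ has $r(G)<|E(G)|$, unbounded if $r(K_n)$ is unbounded. An $\mathcal{M}$-circuit is a graph $C$ with $r(C)<|E(C)|$ and $r(C-e)=|E(C)|-1$ for all edges $e$. Dimensionality $d$: minimum over $\mathcal{M}$-circuits of (minimum degree $-1$); threshold $t$: minimum of $|V(C)|-1$ over $\mathcal{M}$-circuits $C$ of minimum degree $d+1$. For a matroid with rank function $r$ on ground set $E$ and positive integer $k$, a bipartition $(E_1,E_2)$ of $E$ is a vertical $k$-separation if $r(E_1),r(E_2)\ge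 k$ and $r(E_1)+r(E_2)\le r(E)+k-1$; the matroid is vertically $k$-connected if its rank is at least $k$ and it has no vertical $k'$-separation for any positive integer $k'<k$. *)

(* Defs.v *)
From mathcomp Require Import all_boot all_order finmap.
Set Implicit Arguments. Unset Strict Implicit. Unset Printing Implicit Defensive.
Local Open Scope fset_scope.

(* Vertices are natural numbers; an edge {u,v} (u <> v) is encoded as the
   ordered pair (u,v) with u < v.  A graph (without isolated vertices) is a
   finite set of such edges; its vertex set is the set of endpoints. *)
Definition edge := (nat * nat)%type.
Definition graph := {fset edge}.

Definition wf_graph (G : graph) : Prop := forall e, e \in G -> e.1 < e.2.

Definition verts (G : graph) : {fset nat} :=
  [fset e.1 | e in G] `|` [fset e.2 | e in G].

Definition mkedge (u v : nat) : edge := (minn u v, maxn u v).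

Definition complete (V : {fset nat}) : graph :=
  [fset mkedge u v | u in V, v in V & u < v].

Definition Kn (n : nat) : graph := complete [fset i in iota 0 n].

Definition emap (f : nat -> nat) (e : edge) : edge := mkedge (f e.1) (f e.2).
Definition gmap (f : nat -> nat) (G : graph) : graph := [fset emap f e | e in G].

Definition deg (G : graph) (v : nat) : nat :=
  #|` [fset e in G | (e.1 == v) || (e.2 == v)] |.
Definition mindeg_ge (G : graph) (m : nat) : Prop :=
  forall v, v \in verts G -> m <= deg G v.
Definition has_mindeg (G : graph) (m : nat) : Prop :=
  mindeg_ge G m /\ exists2 v, v \in verts G & deg G v = m.

(* A graph matroid family.  mrk G X is the rank, in the matroid M(G) on E(G),
   of a subset X of E(G).  Values outside these arguments are irrelevant. *)
Record graph_matroid_family := GMF {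
  mrk : graph -> graph -> nat;
  mrk_le_card : forall G X, wf_graph G -> X `<=` G -> mrk G X <= #|` X |;
  mrk_mono : forall G X Y, wf_graph G -> X `<=` Y -> Y `<=` G ->
    mrk G X <= mrk G Y;
  mrk_submod : forall G X Y, wf_graph G -> X `<=` G -> Y `<=` G ->
    mrk G (X `|` Y) + mrk G (X `&` Y) <= mrk G X + mrk G Y;
  mrk_iso : forall (f : nat -> nat) G X, injective f -> wf_graph G ->
    X `<=` G -> mrk (gmap f G) (gmap f X) = mrk G X;
  mrk_restr : forall G H X, wf_graph G -> H `<=` G -> X `<=` H ->
    mrk H X = mrk G X
}.

Section Fam.
Variable M : graph_matroid_family.

Definition r (G : graph) : nat := mrk M G G.

Definition nontrivial : Prop := exists G, wf_graph G /\ r G < #|` G |.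
Definition unbounded : Prop := forall m, exists n, m <= r (Kn n).

Definition is_circuit (C : graph) : Prop :=
  wf_graph C /\ r C < #|` C | /\
  forall e, e \in C -> r (C `\ e) = (#|` C |).-1.

(* dimensionality d: minimum over circuits of (minimum degree - 1) *)
Definition is_dimensionality (d : nat) : Prop :=
  (exists C, is_circuit C /\ has_mindeg C d.+1) /\
  (forall C, is_circuit C -> mindeg_ge C d.+1).

(* threshold t: minimum of |V(C)| - 1 over circuits of minimum degree d+1 *)
Definition is_threshold (d t : nat) : Prop :=
  (exists C, [/\ is_circuit C, has_mindeg C d.+1 & (#|` verts C |).-1 = t]) /\
  (forall C, is_circuit C -> has_mindeg C d.+1 -> t <= (#|` verts C |).-1).

(* Rigidity of a graph with explicit vertex set V and edge set E (E within V);
   needed for G - X, which may contain isolated vertices. *)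
Definition rigid_on (V : {fset nat}) (E : graph) : Prop := r E = r (complete V).
Definition rigid (G : graph) : Prop := rigid_on (verts G) G.

End Fam.

(* deletion of a vertex set X: edge set of G - X (vertex set is verts G `\` X) *)
Definition del (G : graph) (X : {fset nat}) : graph :=
  [fset e in G | (e.1 \notin X) && (e.2 \notin X)].

Definition connected_on (V : {fset nat}) (E : graph) : Prop :=
  forall u v, u \in V -> v \in V ->
    exists p : seq nat, path (fun a b => mkedge a b \in E) u p && (last u p == v).

Definition k_connected (G : graph) (k : nat) : Prop :=
  k < #|` verts G | /\
  forall X : {fset nat}, X `<=` verts G -> #|` X | < k ->
    connected_on (verts G `\` X) (del G X).

Definition vredundantly_rigid (M : graph_matroid_family) (G : graph) (k : nat) : Prop :=
  rigid M G /\
  forall X : {fset nat}, X `<=` verts G -> #|` X | <= k ->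
    rigid_on M (verts G `\` X) (del G X).

Definition vertical_sep (M : graph_matroid_family) (G : graph) (k : nat) (E1 E2 : graph) : Prop :=
  [/\ E1 `|` E2 = G, E1 `&` E2 = fset0,
      k <= mrk M G E1, k <= mrk M G E2 &
      mrk M G E1 + mrk M G E2 <= mrk M G G + k - 1].

Definition vertically_connected (M : graph_matroid_family) (G : graph) (k : nat) : Prop :=
  k <= mrk M G G /\
  forall k', 0 < k' -> k' < k -> forall E1 E2, ~ vertical_sep M G k' E1 E2.

(* Main.v *)
Require Import Defs.
From mathcomp Require Import all_boot all_order finmap.
From mathcomp Require Import zify.
Set Implicit Arguments. Unset Strict Implicit. Unset Printing Implicit Defensive.
Local Open Scope fset_scope.


Lemma wf_sub X Y : wf_graph Y -> X `<=` Y -> wf_graph X.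
Proof. by move=> wY /fsubsetP sXY e /sXY /wY. Qed.

Lemma wf_U X Y : wf_graph X -> wf_graph Y -> wf_graph (X `|` Y).
Proof. by move=> wX wY e; rewrite in_fsetU => /orP[/wX|/wY]. Qed.

Lemma deg_mono X Y v : X `<=` Y -> deg X v <= deg Y v.
Proof.
move=> /fsubsetP sXY; apply: fsubset_leq_card; apply/fsubsetP => e.
by rewrite !inE /= => /andP[/sXY -> ->].
Qed.

Section Rank.
Variable M : graph_matroid_family.
Notation rk := (r M).

Lemma rE X Y : wf_graph Y -> X `<=` Y -> rk X = mrk M Y X.
Proof. by move=> wY sXY; rewrite /r (mrk_restr M wY sXY) ?fsubset_refl. Qed.

Lemma r_card X : wf_graph X -> rk X <= #|`X|.
Proof. by move=> wX; apply: mrk_le_card => //; apply: fsubset_refl. Qed.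

Lemma r_mono X Y : wf_graph Y -> X `<=` Y -> rk X <= rk Y.
Proof.
move=> wY sXY; rewrite (rE wY sXY) /r; apply: mrk_mono => //; exact: fsubset_refl.
Qed.

Lemma r_sub X Y : wf_graph X -> wf_graph Y ->
  rk (X `|` Y) + rk (X `&` Y) <= rk X + rk Y.
Proof.
move=> wX wY; have wU := wf_U wX wY.
rewrite (rE wU (fsubset_refl _)) (rE wU (fsubsetUl X Y)) (rE wU (fsubsetUr X Y)).
rewrite (@rE (X `&` Y) (X `|` Y)) //; last first.
  by apply: fsubset_trans (fsubsetIl _ _) (fsubsetUl _ _).
by apply: mrk_submod => //; [exact: fsubsetUl | exact: fsubsetUr].
Qed.

Lemma r0 : rk fset0 = 0.
Proof.
have w0 : wf_graph fset0 by move=> e; rewrite in_fset0.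
by have := r_card w0; rewrite cardfs0; case: (rk _).
Qed.

Lemma r_Ule X Y : wf_graph X -> wf_graph Y -> rk (X `|` Y) <= rk X + #|`Y|.
Proof.
move=> wX wY; have := r_sub wX wY; have := r_card wY; lia.
Qed.

Lemma cl_mono Y Z e : wf_graph (e |` Z) -> Y `<=` Z ->
  rk (e |` Y) = rk Y -> rk (e |` Z) = rk Z.
Proof.
move=> w sYZ h.
have wZ : wf_graph Z := wf_sub w (fsubsetU1 _ _).
have weY : wf_graph (e |` Y) := wf_sub w (fsetUS _ sYZ).
have := r_sub wZ weY.
have -> : Z `|` (e |` Y) = e |` Z.
  apply/fsetP => x; rewrite !inE; move/fsubsetP: sYZ => /(_ x).
  by case: (x \in Y) => [->//|]; case: (x \in Z); case: (x == e).
have : rk Y <= rk (Z `&` (e |` Y)).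
  apply: r_mono; first by apply: wf_sub wZ (fsubsetIl _ _).
  by rewrite fsubsetI sYZ fsubsetU1.
have := @r_mono Z (e |` Z) w (fsubsetU1 _ _).
lia.
Qed.

Lemma cl_union Y F : wf_graph (Y `|` F) ->
  (forall f, f \in F -> rk (f |` Y) = rk Y) -> rk (Y `|` F) = rk Y.
Proof.
elim/fset1U_rect: F => [|x F xF IH] w h; first by rewrite fsetU0.
have -> : Y `|` (x |` F) = x |` (Y `|` F) by rewrite fsetUCA.
have w' : wf_graph (Y `|` F) := wf_sub w (fsetUS _ (fsubsetU1 _ _)).
rewrite (@cl_mono Y) //.
- by apply: IH => // f fF; apply: h; rewrite inE fF orbT.
- by rewrite -fsetUCA.
- exact: fsubsetUl.
- by apply: h; rewrite fset1U1.
Qed.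

Lemma indep_sub I S : wf_graph I -> rk I = #|`I| -> S `<=` I -> rk S = #|`S|.
Proof.
move=> wI hI sSI; have wS := wf_sub wI sSI.
have wD : wf_graph (I `\` S) by apply: wf_sub wI (fsubsetDl _ _).
have := r_Ule wS wD; rewrite fsetUDl fsetDv fsetD0 (fsetUidPr _ _ sSI).
have := cardfsDS sSI; have := fsubset_leq_card sSI; have := r_card wS. lia.
Qed.

Lemma r_del1 X e : wf_graph X -> rk X <= (rk (X `\ e)).+1.
Proof.
move=> wX; case eX: (e \in X); last first.
  by rewrite (_ : X `\ e = X) // ; apply/fsetP => x; rewrite !inE; case: eqP => // ->; rewrite eX.
have w1 : wf_graph (X `\ e) by apply: wf_sub wX (fsubD1set _ _).
have w2 : wf_graph [fset e] by apply: (wf_sub wX); rewrite fsub1set.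
have := r_Ule w1 w2; rewrite cardfs1 fsetUC fsetD1K //; lia.
Qed.

Lemma indep_coloops n Y : #|`Y| = n -> wf_graph Y ->
  (forall f, f \in Y -> rk (Y `\ f) < rk Y) -> rk Y = #|`Y|.
Proof.
elim: n Y => [|n IH] Y hc wY h.
  by move/cardfs0_eq: hc => ->; rewrite r0 cardfs0.
have [Y0|[f fY]] := fset_0Vmem Y; first by rewrite Y0 cardfs0 in hc.
have wY' : wf_graph (Y `\ f) by apply: wf_sub wY (fsubD1set _ _).
have cY : #|`Y| = (#|`Y `\ f|).+1 by rewrite (cardfsD1 f Y) fY.
have h1 := h f fY; have h2 := r_del1 f wY.
have IH' : rk (Y `\ f) = #|`Y `\ f|.
  apply: IH => //; first by lia.
  move=> g; rewrite in_fsetD1 => /andP[gf gY].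
  have hg := h g gY.
  have wYg : wf_graph (Y `\ g) by apply: wf_sub wY (fsubD1set _ _).
  have := r_sub wY' wYg.
  have -> : (Y `\ f) `|` (Y `\ g) = Y.
    apply/fsetP => x; rewrite !inE; case: (eqVneq x f) => [->|xf] /=.
      by rewrite eq_sym gf.
    by case: (x \in Y); case: (x == g).
  have -> : (Y `\ f) `&` (Y `\ g) = (Y `\ f) `\ g.
    by apply/fsetP => x; rewrite !inE; do 2 case: (_ == _) => //=; case: (x \in Y).
  lia.
lia.
Qed.

End Rank.


Lemma in_verts G e u : e \in G -> (e.1 == u) || (e.2 == u) -> u \in verts G.
Proof.
move=> eG /orP[/eqP<-|/eqP<-]; rewrite /verts in_fsetU; apply/orP; [left|right];
  by apply/imfsetP; exists e.
Qed.

Lemma fsetD1C (A : graph) a b : (A `\ a) `\ b = (A `\ b) `\ a.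
Proof. by apply/fsetP => x; rewrite !inE; do 2 case: (_ == _). Qed.

Section Circ.
Variable M : graph_matroid_family.
Notation rk := (r M).

Lemma circuit_of_aux n X e : wf_graph X -> forall D, #|`D| <= n -> D `<=` X -> e \in D ->
  rk D <= rk (D `\ e) -> exists C, [/\ is_circuit M C, C `<=` X & e \in C].
Proof.
move=> wX; elim: n => [|n IH] D hc sDX eD hD.
  by move: hc; rewrite leqn0 cardfs_eq0 => /eqP D0; rewrite D0 in eD.
have wD : wf_graph D := wf_sub wX sDX.
case: (boolP (has (fun f => (f != e) && (rk (D `\ f) <= rk ((D `\ f) `\ e))) (enum_fset D))).
  move=> /hasP[f fD /andP[fe hf]].
  apply: (IH (D `\ f)) => //.
  - by have := cardfsD1 f D; rewrite fD; lia.
  - exact: fsubset_trans (fsubD1set _ _) sDX.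
  - by rewrite in_fsetD1 eq_sym fe.
move=> /hasPn hno.
have hno' : forall f, f \in D -> f != e -> rk ((D `\ f) `\ e) < rk (D `\ f).
  by move=> f fD fe; have := hno f fD; rewrite fe /=; lia.
have wDe : wf_graph (D `\ e) := wf_sub wD (fsubD1set _ _).
have cD : #|`D| = (#|`D `\ e|).+1 by rewrite (cardfsD1 e D) eD.
have indep : rk (D `\ e) = #|`D `\ e|.
  apply: (@indep_coloops M _ _ erefl wDe) => f; rewrite in_fsetD1 => /andP[fe fD].
  have h1 := hno' f fD fe.
  have wDf : wf_graph (D `\ f) := wf_sub wD (fsubD1set _ _).
  have h2 := r_mono M wD (fsubD1set D f).
  rewrite fsetD1C; lia.
exists D; split => //; split => //; split; first by lia.
move=> f fD; case: (eqVneq f e) => [->|fe]; first by rewrite indep cD.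
have h1 := hno' f fD fe.
have wDf : wf_graph (D `\ f) := wf_sub wD (fsubD1set _ _).
have h2 := r_del1 M e wDf.
have h3 : rk ((D `\ f) `\ e) = #|`(D `\ f) `\ e|.
  apply: (indep_sub (M:=M) wDe indep); rewrite fsetD1C; exact: fsubD1set.
have h4 : #|`D `\ e| = (#|`(D `\ f) `\ e|).+1.
  by rewrite fsetD1C (cardfsD1 f (D `\ e)) in_fsetD1 fe fD.
lia.
Qed.

Lemma circuit_of X e : wf_graph X -> e \in X -> rk X <= rk (X `\ e) ->
  exists C, [/\ is_circuit M C, C `<=` X & e \in C].
Proof. by move=> wX eX h; apply: (circuit_of_aux wX (leqnn _) (fsubset_refl _)). Qed.

Variable d : nat.
Hypothesis hmin : forall C, is_circuit M C -> mindeg_ge C d.+1.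

Lemma coloop_deg X e u : wf_graph X -> e \in X -> (e.1 == u) || (e.2 == u) ->
  deg X u <= d -> rk X = (rk (X `\ e)).+1.
Proof.
move=> wX eX eu hd.
have h1 := r_del1 M e wX.
have h2 := r_mono M wX (fsubD1set X e).
case: (leqP (rk X) (rk (X `\ e))) => h; last by lia.
have [C [cC sCX eC]] := circuit_of wX eX h.
have := hmin cC (in_verts eC eu); have := deg_mono u sCX; lia.
Qed.

Lemma add_lowdeg H F : wf_graph (H `|` F) -> H `&` F = fset0 ->
  (forall e, e \in F -> exists u, ((e.1 == u) || (e.2 == u)) && (deg (H `|` F) u <= d)) ->
  rk (H `|` F) = (rk H + #|`F|)%N.
Proof.
elim/fset1U_rect: F => [|x F xF IH] w dj h; first by rewrite fsetU0 cardfs0 addn0.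
have xH : x \notin H.
  apply/negP => xH; move/fsetP: dj => /(_ x); rewrite !inE xH eqxx /=; done.
have E1 : H `|` (x |` F) = x |` (H `|` F) by rewrite fsetUCA.
have E2 : (x |` (H `|` F)) `\ x = H `|` F.
  by apply: fsetU1K; rewrite in_fsetU negb_or xH xF.
have w' : wf_graph (H `|` F) := wf_sub w (fsetUS _ (fsubsetU1 _ _)).
have [u /andP[xu du]] := h x (fset1U1 _ _).
rewrite E1 in w du *.
rewrite (coloop_deg w (fset1U1 _ _) xu du) E2 cardfsU1 xF IH //.
- by lia.
- apply/fsetP => y; move/fsetP: dj => /(_ y); rewrite !inE.
  by case: (y \in H); case: (y \in F); case: (y == x).
- move=> e eF; have [v /andP[ev dv]] := h e (fset1Ur _ eF).
  exists v; rewrite ev /=; apply: leq_trans _ dv; rewrite E1; apply: deg_mono.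
  exact: fsubsetU1.
Qed.

End Circ.


Definition touches (e : edge) (u : nat) := (e.1 == u) || (e.2 == u).

Lemma edge_eq (f : edge) a b : f.1 < f.2 -> touches f a -> touches f b -> a != b ->
  f = (minn a b, maxn a b).
Proof.
case: f => x y /= lt /orP[]/eqP<- /orP[]/eqP<-; rewrite ?eqxx //= => _;
  rewrite /minn /maxn; try (by rewrite lt);
  by rewrite ltnNge (ltnW lt) /=.
Qed.

Lemma exists_sub (A : graph) m : m <= #|`A| -> exists B, B `<=` A /\ #|`B| = m.
Proof.
move=> hm; exists [fset x in take m (enum_fset A)]; split.
  apply/fsubsetP => x; rewrite in_fset /= => /mem_take; by [].
rewrite card_fseq undup_id; last by apply: take_uniq; exact: fset_uniq.
by rewrite size_take; move: hm; case: ltngtP => //; lia.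
Qed.

Lemma exists_subn (A : {fset nat}) m : m <= #|`A| -> exists B, B `<=` A /\ #|`B| = m.
Proof.
move=> hm; exists [fset x in take m (enum_fset A)]; split.
  apply/fsubsetP => x; rewrite in_fset /= => /mem_take; by [].
rewrite card_fseq undup_id; last by apply: take_uniq; exact: fset_uniq.
by rewrite size_take; move: hm; case: ltngtP => //; lia.
Qed.

Lemma in_vertsP G u : reflect (exists2 e, e \in G & touches e u) (u \in verts G).
Proof.
apply: (iffP idP).
  rewrite /verts in_fsetU => /orP[]/imfsetP[e eG ->]; exists e => //; rewrite /touches eqxx ?orbT //.
by case=> e eG; apply: in_verts.
Qed.

Section Star.
Variable M : graph_matroid_family.
Notation rk := (r M).
Variable d : nat.
Hypothesis hmin : forall C, is_circuit M C -> mindeg_ge C d.+1.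

Lemma F1 H S z : wf_graph (H `|` S) -> z \notin verts H ->
  (forall e, e \in S -> touches e z) ->
  rk H + minn d #|`S| <= rk (H `|` S).
Proof.
move=> w zH hS.
have [S' [sS' cS']] := @exists_sub S (minn d #|`S|) (geq_minr _ _).
have w' : wf_graph (H `|` S') := wf_sub w (fsetUS _ sS').
have dj : H `&` S' = fset0.
  apply/fsetP => e; rewrite !inE; apply/negP => /andP[eH eS'].
  by move/negP: zH; apply; apply: in_verts eH (hS e (fsubsetP sS' e eS')).
rewrite -cS' -(add_lowdeg hmin w' dj).
  by apply: r_mono (wf_sub w (fsubset_refl _)) _; exact: fsetUS.
move=> e eS'; exists z; apply/andP; split; first exact: (hS e (fsubsetP sS' e eS')).
apply: leq_trans (_ : #|`S'| <= d); last by rewrite cS' geq_minl.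
apply: fsubset_leq_card; apply/fsubsetP => f; rewrite !inE /= => /andP[/orP[fH|//]] fz.
by move/negP: zH; case; apply: in_verts fH fz.
Qed.

Hypothesis hd1 : 0 < d.

Lemma star_indep S z : wf_graph S -> (forall e, e \in S -> touches e z) -> rk S = #|`S|.
Proof.
move=> wS hS.
have := @add_lowdeg M d hmin fset0 S; rewrite fset0U r0 fset0I; apply => // e eS.
have lt := wS e eS.
pose u := if e.1 == z then e.2 else e.1.
have eu : touches e u by rewrite /touches /u; case: (e.1 == z); rewrite eqxx ?orbT.
have uz : u != z.
  move: (hS e eS); rewrite /u /touches; case: eqP => [<- _|ne /= /eqP <-].
    by rewrite neq_ltn lt orbT.
  by rewrite neq_ltn lt.
exists u; apply/andP; split; first exact: eu.
apply: leq_trans hd1.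
rewrite -(cardfs1 e); apply: fsubset_leq_card; apply/fsubsetP => f.
rewrite !inE /= => /andP[fS fu]; apply/eqP.
by rewrite (edge_eq (wS f fS) fu (hS f fS) uz) (edge_eq lt eu (hS e eS) uz).
Qed.

End Star.


Definition starG (G : graph) c := [fset e in G | touches e c].
Lemma degE G c : deg G c = #|` starG G c|. Proof. by []. Qed.
Definition other c (e : edge) := if e.1 == c then e.2 else e.1.

Lemma mkedge_eq a b a' b' : mkedge a b = mkedge a' b' ->
  (a = a' /\ b = b') \/ (a = b' /\ b = a').
Proof. rewrite /mkedge => -[]; lia. Qed.

Lemma mkedgeC a b : mkedge a b = mkedge b a.
Proof. by rewrite /mkedge minnC maxnC. Qed.

Lemma mkedgeE (e : edge) : e.1 < e.2 -> mkedge e.1 e.2 = e.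
Proof. by case: e => x y /= h; rewrite /mkedge; congr pair; lia. Qed.

Lemma mem_complete V e : (e \in complete V) = [&& e.1 \in V, e.2 \in V & e.1 < e.2].
Proof.
apply/imfset2P/idP.
  move=> [u uV [v]]; rewrite !inE /= => /andP[vV uv] ->.
  by rewrite /mkedge /minn /maxn uv /= uV vV uv.
move=> /and3P[h1 h2 h3]; exists e.1 => //; exists e.2; first by rewrite !inE /= h2 h3.
by rewrite mkedgeE.
Qed.

Lemma wf_complete V : wf_graph (complete V).
Proof. by move=> e; rewrite mem_complete => /and3P[]. Qed.

Lemma complete_mkedge V a b : a \in V -> b \in V -> a != b -> mkedge a b \in complete V.
Proof.
move=> aV bV ab; rewrite mem_complete /mkedge /minn /maxn.
case: ltngtP => h /=; rewrite ?aV ?bV ?h //.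
by move: ab; rewrite h eqxx.
Qed.

Lemma complete_sub V W : V `<=` W -> complete V `<=` complete W.
Proof.
move=> /fsubsetP s; apply/fsubsetP => e; rewrite !mem_complete => /and3P[a b ->].
by rewrite (s _ a) (s _ b).
Qed.

Lemma verts_complete V : verts (complete V) `<=` V.
Proof.
apply/fsubsetP => u /in_vertsP[e]; rewrite mem_complete => /and3P[a b _] /orP[]/eqP<- //.
Qed.

Lemma emap_inj f e e' : injective f -> e.1 < e.2 -> e'.1 < e'.2 -> emap f e = emap f e' -> e = e'.
Proof.
move=> fi; case: e => a b; case: e' => a' b' /= h h'; rewrite /emap /=.
move=> /mkedge_eq[[/fi ea /fi eb]|[/fi ea /fi eb]]; subst => //; lia.
Qed.

Lemma leq_sum_seq (u : seq nat) x : x \in u -> x <= \sum_(i <- u) i.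
Proof.
elim: u => //= a l IH; rewrite in_cons big_cons => /orP[/eqP->|/IH]; lia.
Qed.

Lemma card_uniq_seq (s : seq nat) : uniq s -> #|` [fset x in s]| = size s.
Proof. by move=> us; rewrite card_fseq undup_id. Qed.

Lemma mem_starG G c e : (e \in starG G c) = (e \in G) && touches e c.
Proof. by rewrite /starG inE. Qed.


Lemma other_touch (e : edge) c : e.1 < e.2 -> touches e c ->
  touches e (other c e) /\ other c e != c.
Proof.
case: e => a b /= h; rewrite /touches /other /=.
case: (eqVneq a c) => [<-|ac] /= hc.
  by rewrite eqxx orbT; split => //; rewrite gtn_eqF.
by rewrite eqxx; split.
Qed.

Section Nb.
Variables (C0 : graph) (c : nat).
Hypothesis wC0 : wf_graph C0.

Definition Nb := [fset other c e | e in starG C0 c].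

Lemma other_inj : {in starG C0 c &, injective (other c)}.
Proof.
move=> e f; rewrite !mem_starG => /andP[eC et] /andP[fC ft] E.
have [t1 n1] := other_touch (wC0 eC) et.
have [t2 n2] := other_touch (wC0 fC) ft.
rewrite -E in t2.
have ne : c != other c e by rewrite eq_sym.
by rewrite (edge_eq (wC0 eC) et t1 ne) (edge_eq (wC0 fC) ft t2 ne).
Qed.

Lemma card_Nb : #|` Nb| = deg C0 c.
Proof. by rewrite card_in_imfset //; apply: other_inj. Qed.

Lemma Nb_sub : Nb `<=` verts C0 `\ c.
Proof.
apply/fsubsetP => x /imfsetP[e]; rewrite mem_starG => /andP[eC et] ->.
have [t1 n1] := other_touch (wC0 eC) et.
by rewrite in_fsetD1 n1 (in_verts eC t1).
Qed.

Lemma deg_le_verts : deg C0 c <= (#|` verts C0|).-1.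
Proof.
rewrite -card_Nb; have := fsubset_leq_card Nb_sub.
case cV: (c \in verts C0).
  by rewrite (cardfsD1 c (verts C0)) cV; lia.
have -> : verts C0 `\ c = verts C0.
  by apply/fsetP => x; rewrite in_fsetD1; case: eqP => // ->; rewrite cV.
move=> h; suff : #|` Nb| = 0 by move=> ->.
apply/eqP; rewrite cardfs_eq0; apply/eqP/fsetP => x; rewrite inE.
apply/negP => /imfsetP[e]; rewrite mem_starG => /andP[eC et] _.
by rewrite (in_verts eC et) in cV.
Qed.

End Nb.


Section Embed.
Variables (C0 : graph) (c : nat) (d : nat).
Hypotheses (wC0 : wf_graph C0) (hdeg : deg C0 c = d.+1).
Variables (W P : {fset nat}) (z w n0 : nat).
Hypotheses (zW : z \notin W) (PW : P `<=` W) (cP : #|`P| = d) (wW : w \in W) (wP : w \notin P)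
  (hsize : #|` verts C0| <= #|` W|.+1) (n0N : n0 \in Nb C0 c).

Let N1 := Nb C0 c `\ n0.
Let R := verts C0 `\` (c |` Nb C0 c).
Let s := c :: n0 :: (enum_fset N1 ++ enum_fset R).
Let u := z :: w :: (enum_fset P ++ enum_fset (W `\` (w |` P))).
Let Mb := (\sum_(i <- u) i).+1.
Definition emb x := if x \in s then nth 0 u (index x s) else (x + Mb)%N.

Lemma cV : c \in verts C0.
Proof.
have : n0 \in Nb C0 c by [].
by move=> /imfsetP[e]; rewrite mem_starG => /andP[eC et] _; apply: in_verts eC et.
Qed.

Lemma Nbs : Nb C0 c `<=` verts C0 `\ c. Proof. exact: Nb_sub. Qed.

Lemma s_uniq : uniq s.
Proof.
have nV := fsubsetP Nbs.
have n0c : n0 != c by have := nV _ n0N; rewrite in_fsetD1 => /andP[].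
rewrite /s /= !in_cons !mem_cat !negb_or cat_uniq !fset_uniq /=.
rewrite eq_sym n0c /=.
have cN : c \notin Nb C0 c by apply/negP => /nV; rewrite in_fsetD1 eqxx.
rewrite /N1 /R !in_fsetD1 !in_fsetD !in_fset1U !eqxx /= (negbTE cN) n0N orbT /= andbT.
rewrite andbF /= andbT.
apply/hasPn => x; rewrite in_fsetD in_fset1U negb_or => /andP[/andP[xc xN] _].
by rewrite in_fsetD1 negb_and xN orbT.
Qed.

Lemma n0V : n0 \in verts C0 /\ n0 != c.
Proof. by have := fsubsetP Nbs _ n0N; rewrite in_fsetD1 => /andP[]. Qed.

Lemma s_mem x : (x \in s) = (x \in verts C0).
Proof.
rewrite /s !in_cons mem_cat /N1 /R !in_fsetD1 !in_fsetD !in_fset1U negb_or.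
have nV := fsubsetP Nbs x; rewrite in_fsetD1 in nV.
have [n0v _] := n0V.
case: (eqVneq x c) => [->|xc] /=; first by rewrite cV.
case: (eqVneq x n0) => [->|xn] /=; first by rewrite n0v.
by case: (boolP (x \in Nb C0 c)) => [/nV/andP[_ ->]|] //=; rewrite orbF.
Qed.

Lemma u_uniq : uniq u.
Proof.
rewrite /u /= !in_cons !mem_cat !negb_or cat_uniq !fset_uniq /=.
have PW' := fsubsetP PW.
rewrite !in_fsetD !in_fset1U !eqxx /= wP andbT.
have zw : z != w by apply/negP => /eqP E; move: zW; rewrite E wW.
rewrite zw (negbTE zW) andbF /= andbT.
apply/andP; split; first by apply/negP => /PW' zP; move: zW; rewrite zP.
rewrite andbT.
by apply/hasPn => x; rewrite in_fsetD in_fset1U negb_or => /andP[/andP[_ ->]].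
Qed.

Lemma u_W j : j < size u -> 0 < j -> nth 0 u j \in W.
Proof.
case: j => // j; rewrite /u /= => hj _.
have := mem_nth 0 (hj : j < size (w :: (enum_fset P ++ enum_fset (W `\` (w |` P))))).
rewrite in_cons mem_cat in_fsetD => /orP[/eqP->//|/orP[/(fsubsetP PW)//|/andP[_ ->]//]].
Qed.

Lemma size_s : size s = #|` verts C0|.
Proof.
rewrite -(card_uniq_seq s_uniq); congr (size (enum_fset _)).
by apply/fsetP => x; rewrite in_fset /= s_mem.
Qed.

Lemma size_u : size u = (#|` W|).+1.
Proof.
rewrite -(card_uniq_seq u_uniq).
have -> : [fset x in u] = z |` W.
  apply/fsetP => x; rewrite in_fset /= /u !in_cons mem_cat in_fset1U in_fsetD in_fset1U negb_or.
  case: (x == z) => //=; case: (eqVneq x w) => [->|xw] /=; first by rewrite wW.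
  case: (boolP (x \in P)) => [/(fsubsetP PW)->//|] /=.
by [].
by rewrite cardfsU1 zW.
Qed.

Lemma su : size s <= size u.
Proof. by rewrite size_s size_u. Qed.

Lemma emb_inj : injective emb.
Proof.
have hM : forall j, j < size u -> nth 0 u j < Mb.
  by move=> j hj; rewrite /Mb ltnS; apply: leq_sum_seq; apply: mem_nth.
move=> x y; rewrite /emb.
case: (boolP (x \in s)) => xs; case: (boolP (y \in s)) => ys.
- move=> /eqP; rewrite nth_uniq ?u_uniq //; last 2 first.
    by apply: leq_trans su; rewrite index_mem.
    by apply: leq_trans su; rewrite index_mem.
  by move=> /eqP E; rewrite -(nth_index 0 xs) E nth_index.
- have := hM (index x s); rewrite (leq_trans _ su) ?index_mem // => /(_ isT); lia.
- have := hM (index y s); rewrite (leq_trans _ su) ?index_mem // => /(_ isT); lia.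
- lia.
Qed.

Lemma emb_c : emb c = z.
Proof. by rewrite /emb /s in_cons eqxx /= eqxx. Qed.

Lemma emb_n0 : emb n0 = w.
Proof.
have [_ n0c] := n0V.
have cn : (c == n0) = false by rewrite eq_sym (negbTE n0c).
by rewrite /emb /s !in_cons eqxx orbT /= cn eqxx.
Qed.

Lemma emb_W x : x \in verts C0 -> x != c -> emb x \in W.
Proof.
move=> xV xc; have xs : x \in s by rewrite s_mem.
rewrite /emb xs; apply: u_W; first by apply: leq_trans su; rewrite index_mem.
by rewrite /s /= eq_sym (negbTE xc).
Qed.

Lemma emb_N1 x : x \in N1 -> emb x \in P.
Proof.
move=> xN.
have [xn xNb] : x != n0 /\ x \in Nb C0 c by move: xN; rewrite /N1 in_fsetD1 => /andP[].
have xc : x != c by have := fsubsetP Nbs _ xNb; rewrite in_fsetD1 => /andP[].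
have xs : x \in s by rewrite s_mem; have := fsubsetP Nbs _ xNb; rewrite in_fsetD1 => /andP[].
rewrite /emb xs /s /= eq_sym (negbTE xc) eq_sym (negbTE xn) /= index_cat xN /u /=.
have hi : index x (enum_fset N1) < size (enum_fset P).
  have : #|` N1| = d.
    have := cardfsD1 n0 (Nb C0 c); rewrite n0N (@card_Nb C0 c wC0) hdeg /N1; lia.
  by move=> hN; rewrite cP -hN index_mem.
by rewrite nth_cat hi; apply: mem_nth.
Qed.

End Embed.


Definition Tz z (P : {fset nat}) : graph := [fset mkedge z p | p in P].

Lemma mem_Tz z P e : (e \in Tz z P) = [exists p : P, e == mkedge z (val p)].
Proof.
apply/imfsetP/existsP => [[p pP ->]|[p /eqP ->]]; first by exists [` pP].
by exists (val p) => //; apply: valP.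
Qed.

Lemma Tz_in z P p : p \in P -> mkedge z p \in Tz z P.
Proof. by move=> pP; apply/imfsetP; exists p. Qed.

Lemma Tz_sub z P W : z \notin W -> P `<=` W -> Tz z P `<=` complete (z |` W).
Proof.
move=> zW PW; apply/fsubsetP => e /imfsetP[p pP ->].
apply: complete_mkedge; rewrite ?fset1U1 ?fset1Ur ?(fsubsetP PW) //.
by apply/negP => /eqP E; move: zW; rewrite E (fsubsetP PW).
Qed.

Lemma card_Tz z P : z \notin P -> #|` Tz z P| = #|` P|.
Proof.
move=> zP; rewrite card_in_imfset // => p q pP qP /mkedge_eq[[_ ->]//|[E1 E2]].
by move: zP; rewrite E1 qP.
Qed.

Lemma emap_touch f (e : edge) c : touches e c -> emap f e = mkedge (f c) (f (other c e)).
Proof.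
rewrite /touches /emap /other => /orP[/eqP->|/eqP E]; rewrite ?eqxx //.
case: eqP => [->|_]; first by rewrite E.
by rewrite E mkedgeC.
Qed.

Lemma fsetU1_id (x : edge) (A : graph) : x \in A -> x |` A = A.
Proof. by move=> xA; apply/fsetP => y; rewrite in_fset1U; case: eqP => // ->; rewrite xA. Qed.

Section F2.
Variable M : graph_matroid_family.
Notation rk := (r M).
Variables (d t : nat) (C0 : graph) (c : nat).
Hypotheses (hC : is_circuit M C0) (hdeg : deg C0 c = d.+1) (hvc : (#|` verts C0|).-1 = t).
Variables (W P : {fset nat}) (z w : nat).
Hypotheses (zW : z \notin W) (PW : P `<=` W) (cP : #|`P| = d) (wW : w \in W) (wP : w \notin P)
  (htW : t <= #|` W|).

Lemma wf_YT : wf_graph (mkedge z w |` (complete W `|` Tz z P)).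
Proof.
refine (wf_sub (@wf_complete (z |` W)) _); rewrite fsubUset fsub1set fsubUset.
rewrite Tz_sub // complete_sub ?fsubsetU1 // !andbT.
apply: complete_mkedge; rewrite ?fset1U1 ?fset1Ur //.
by apply/negP => /eqP E; move: zW; rewrite E wW.
Qed.

Lemma emb_closure : rk (mkedge z w |` (complete W `|` Tz z P)) = rk (complete W `|` Tz z P).
Proof.
have wC0 : wf_graph C0 by case: hC.
have hsize : #|` verts C0| <= (#|` W|).+1 by lia.
have [n0 n0N] : exists n0, n0 \in Nb C0 c.
  apply/fset0Pn; rewrite -cardfs_gt0 (@card_Nb C0 c wC0) hdeg //.
have fi := emb_inj wC0 hdeg zW PW cP wW wP hsize n0N.
set f := emb C0 c W P z w n0 in fi.
have fc : f c = z by apply: emb_c.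
have fn0 : f n0 = w by apply: emb_n0.
have fW := emb_W wC0 zW PW wW wP hsize n0N.
have fN1 := emb_N1 wC0 hdeg zW PW cP wW wP hsize n0N.
set ezw := mkedge z w.
set Y := complete W `|` Tz z P.
have := n0N; move=> /imfsetP[e0]; rewrite mem_starG => /andP[e0C e0c] e0n.
have fe0 : emap f e0 = ezw by rewrite (emap_touch _ e0c) fc -e0n fn0.
set C' := gmap f C0.
have ezwC : ezw \in C' by rewrite -fe0; apply/imfsetP; exists e0.
have sub : C' `<=` ezw |` Y.
  apply/fsubsetP => x /imfsetP[e eC ->].
  have lt := wC0 e eC.
  case: (boolP (touches e c)) => ec.
    rewrite (emap_touch _ ec) fc.
    have oN : other c e \in Nb C0 c by apply/imfsetP; exists e => //; rewrite mem_starG eC ec.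
    case: (eqVneq (other c e) n0) => [->|on]; first by rewrite fn0 fset1U1.
    rewrite fset1Ur // in_fsetU; apply/orP; right; apply: Tz_in; apply: fN1.
    by rewrite in_fsetD1 on oN.
  rewrite fset1Ur // in_fsetU; apply/orP; left; rewrite /emap.
  move: ec; rewrite /touches negb_or => /andP[e1c e2c].
  apply: complete_mkedge; rewrite ?fW //; try by apply: in_verts eC _; rewrite eqxx ?orbT.
  apply/negP => /eqP /fi E; move: lt; rewrite E ltnn //.
have r1 : rk C' = rk C0 by rewrite /r (mrk_iso M fi wC0 (fsubset_refl _)).
have wC0e : wf_graph (C0 `\ e0) := wf_sub wC0 (fsubD1set _ _).
have r2 : rk (gmap f (C0 `\ e0)) = rk (C0 `\ e0).
  by rewrite /r (mrk_iso M fi wC0e (fsubset_refl _)).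
have E : gmap f (C0 `\ e0) = C' `\ ezw.
  apply/fsetP => x; rewrite in_fsetD1; apply/imfsetP/andP.
    move=> [e]; rewrite in_fsetD1 => /andP[ee0 eC] ->; split; last by apply/imfsetP; exists e.
    by rewrite -fe0; apply/negP => /eqP /(emap_inj fi (wC0 e eC) (wC0 e0 e0C)) E; move: ee0; rewrite E eqxx.
  move=> [xn /imfsetP[e eC xe]]; exists e => //; rewrite in_fsetD1 eC andbT.
  by apply/negP => /eqP E; move: xn; rewrite xe E fe0 eqxx.
have hcirc : rk C0 <= rk (C0 `\ e0).
  by case: hC => _ [h1 h2]; rewrite (h2 e0 e0C); lia.
have wC' : wf_graph C' := wf_sub wf_YT sub.
have cl0 : rk (ezw |` (C' `\ ezw)) = rk (C' `\ ezw).
  rewrite fsetD1K //; apply/eqP; rewrite eqn_leq; apply/andP; split.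
    by rewrite -E r2 r1.
  by apply: r_mono wC' (fsubD1set _ _).
apply: (cl_mono wf_YT _ cl0).
by rewrite fsubDset.
Qed.
End F2.


Lemma Tz_touch z P e : e \in Tz z P -> touches e z.
Proof.
move=> /imfsetP[p _ ->]; rewrite /touches /mkedge /=; apply/orP.
case: (leqP z p) => h; [left|right]; apply/eqP; lia.
Qed.

Section F2b.
Variable M : graph_matroid_family.
Notation rk := (r M).
Variable d : nat.
Hypothesis hmin : forall C, is_circuit M C -> mindeg_ge C d.+1.

Lemma F2_lower W z : z \notin W -> d <= #|` W| ->
  (rk (complete W) + d <= rk (complete (z |` W)))%N.
Proof.
move=> zW dW.
have [P [PW cP]] := exists_subn dW.
have zP : z \notin P by apply/negP => /(fsubsetP PW); apply/negP.
have wU : wf_graph (complete W `|` Tz z P).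
  refine (wf_sub (@wf_complete (z |` W)) _).
  by rewrite fsubUset Tz_sub // complete_sub ?fsubsetU1.
have := F1 hmin wU _ (@Tz_touch z P).
rewrite card_Tz // cP minnn => /(_ _) h.
apply: leq_trans (h _) _.
  by apply/negP => /(fsubsetP (verts_complete W)); apply/negP.
apply: r_mono; first exact: wf_complete.
by rewrite fsubUset Tz_sub // complete_sub ?fsubsetU1.
Qed.

Variables (t : nat) (C0 : graph) (c : nat).
Hypotheses (hC : is_circuit M C0) (hdeg : deg C0 c = d.+1) (hvc : (#|` verts C0|).-1 = t).

Lemma t_ge : d < t.
Proof.
have wC0 : wf_graph C0 by case: hC.
by have := deg_le_verts c wC0; rewrite hdeg hvc.
Qed.

Lemma F2_upper W z : z \notin W -> t <= #|` W| ->
  (rk (complete (z |` W)) <= rk (complete W) + d)%N.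
Proof.
move=> zW htW.
have dW : d <= #|` W| by have := t_ge; lia.
have [P [PW cP]] := exists_subn dW.
have zP : z \notin P by apply/negP => /(fsubsetP PW); apply/negP.
set Y := complete W `|` Tz z P.
have wY : wf_graph (Y `|` complete (z |` W)).
  refine (wf_sub (@wf_complete (z |` W)) _).
  by rewrite !fsubUset Tz_sub // complete_sub ?fsubsetU1 ?fsubset_refl.
have wY' : wf_graph Y := wf_sub wY (fsubsetUl _ _).
have key : forall x, x \in W -> rk (mkedge z x |` Y) = rk Y.
  move=> x xW; case: (boolP (x \in P)) => xP.
    by rewrite fsetU1_id // in_fsetU Tz_in ?orbT.
  exact: (emb_closure hC hdeg hvc zW PW cP xW xP htW).
have h : rk (Y `|` complete (z |` W)) = rk Y.
  apply: cl_union => // f; rewrite mem_complete !in_fset1U => /and3P[h1 h2 lt].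
  have fE := mkedgeE lt.
  case: (eqVneq f.1 z) h1 => [e1|n1] /= h1.
    have fW : f.2 \in W by move: h2; case: eqP => // E; move: lt; rewrite E e1 ltnn.
    by rewrite -fE e1 key.
  case: (eqVneq f.2 z) h2 => [e2|n2] /= h2.
    by rewrite -fE e2 mkedgeC key.
  by rewrite fsetU1_id // in_fsetU mem_complete h1 h2 lt.
apply: leq_trans (r_mono M wY (fsubsetUr _ _)) _.
rewrite h; apply: leq_trans (r_Ule M (@wf_complete W) (wf_sub wY' (fsubsetUr _ _))) _.
by rewrite card_Tz // cP.
Qed.

End F2b.


Lemma mem_del G X e : (e \in del G X) = [&& e \in G, e.1 \notin X & e.2 \notin X].
Proof. by rewrite /del inE. Qed.

Lemma del_sub G X : del G X `<=` G.
Proof. by apply/fsubsetP => e; rewrite mem_del => /andP[]. Qed.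

Lemma verts_del G X : verts (del G X) `<=` verts G `\` X.
Proof.
apply/fsubsetP => u /in_vertsP[e]; rewrite mem_del => /and3P[eG e1 e2] eu.
rewrite in_fsetD (in_verts eG eu) andbT.
by move: eu; rewrite /touches => /orP[]/eqP<-.
Qed.

Lemma verts_sub G H : H `<=` G -> verts H `<=` verts G.
Proof.
move=> /fsubsetP s; apply/fsubsetP => u /in_vertsP[e eH eu]; exact: in_verts (s _ eH) eu.
Qed.

Lemma sub_complete_verts G : wf_graph G -> G `<=` complete (verts G).
Proof.
move=> wG; apply/fsubsetP => e eG; rewrite mem_complete (wG e eG) andbT.
by rewrite !(in_verts eG) // /touches eqxx ?orbT.
Qed.

Section Deg.
Variable M : graph_matroid_family.
Notation rk := (r M).
Variables (d t : nat).
Hypothesis hmin : forall C, is_circuit M C -> mindeg_ge C d.+1.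
Hypothesis hdt : d < t.

Lemma rigid_deg H W z : wf_graph H -> verts H `<=` W -> rk (complete W) <= rk H ->
  z \in W -> t <= #|` W| -> d <= deg H z.
Proof.
move=> wH HW hr zW tW.
set S := starG H z.
have wS : wf_graph S := wf_sub wH (fset_sub _ _).
set H' := H `\` S.
have wH' : wf_graph H' := wf_sub wH (fsubsetDl _ _).
have h1 : rk H <= rk H' + #|` S|.
  have EH : H' `|` S = H.
    apply/fsetP => e; rewrite in_fsetU in_fsetD mem_starG.
    by case: (e \in H); case: (touches e z).
  by have := r_Ule M wH' wS; rewrite EH.
have h2 : rk H' <= rk (complete (W `\ z)).
  apply: r_mono; first exact: wf_complete.
  apply/fsubsetP => e; rewrite in_fsetD mem_starG negb_and => /andP[/orP[eH|ez] eH']; first by rewrite eH' in eH.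
  rewrite mem_complete (wH e eH') andbT !in_fsetD1.
  move: ez; rewrite /touches negb_or => /andP[-> ->] /=.
  by rewrite !(fsubsetP HW) // (in_verts eH') // /touches eqxx ?orbT.
have h3 := @F2_lower M d hmin (W `\ z) z.
rewrite fsetD1K // in_fsetD1 eqxx /= in h3.
have h4 : d <= #|` W `\ z| by have := cardfsD1 z W; rewrite zW; lia.
have := h3 isT h4; rewrite degE -/S; lia.
Qed.

Hypothesis hd1 : 0 < d.

Lemma deg_redundant G k z : wf_graph G ->
  (forall X, X `<=` verts G -> #|` X| <= k -> rigid_on M (verts G `\` X) (del G X)) ->
  k + t <= #|` verts G| -> z \in verts G -> d + k <= deg G z.
Proof.
move=> wG vr hsz zV.
set D := deg G z.
have [Ch [ChS cCh]] := @exists_sub (starG G z) (minn k D) (geq_minr _ _).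
set N := [fset other z e | e in Ch].
have cN : #|` N| <= minn k D by rewrite -cCh; apply: leq_imfset_card.
have NV : N `<=` verts G.
  apply/fsubsetP => x /imfsetP[e eCh ->]; move: (fsubsetP ChS e eCh); rewrite mem_starG => /andP[eG ez].
  by have [t1 _] := other_touch (wG e eG) ez; apply: in_verts eG t1.
have zN : z \notin N.
  apply/negP => /imfsetP[e eCh]; move: (fsubsetP ChS e eCh); rewrite mem_starG => /andP[eG ez].
  by have [_ n1] := other_touch (wG e eG) ez => E; rewrite -E eqxx in n1.
have hr := vr N NV (leq_trans cN (geq_minl _ _)).
have wd : wf_graph (del G N) := wf_sub wG (del_sub _ _).
have := @rigid_deg (del G N) (verts G `\` N) z wd (verts_del _ _) _ _ _.
rewrite hr leqnn in_fsetD zN zV /= => /(_ isT isT) h.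
have h' : deg (del G N) z <= D - minn k D.
  rewrite -cCh /D degE -cardfsDS //; apply: fsubset_leq_card.
  apply/fsubsetP => e; rewrite mem_starG mem_del in_fsetD mem_starG => /andP[/and3P[eG e1 e2] ez].
  rewrite eG ez /= andbT; apply/negP => eCh.
  have [t1 _] := other_touch (wG e eG) ez.
  have oN : other z e \in N by rewrite /N; apply/imfsetP; exists e; [exact: eCh|].
  by move: t1; rewrite /touches => /orP[]/eqP E; [move: e1|move: e2]; rewrite E oN.
have : t <= #|` verts G `\` N|.
  have := cardfsDS NV; have := leq_trans cN (geq_minl _ _); lia.
move=> /h; lia.
Qed.

End Deg.


Lemma touch_mk1 x y : touches (mkedge x y) x.
Proof. rewrite /touches /mkedge /=; apply/orP; case: (leqP x y) => h; [left|right]; apply/eqP; lia. Qed.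
Lemma touch_mk2 x y : touches (mkedge x y) y.
Proof. by rewrite mkedgeC touch_mk1. Qed.

Lemma mixed_path G A (p : seq nat) x :
  (exists2 a, a \in A & touches a x) -> path (fun a b => mkedge a b \in G) x p ->
  (exists2 b, b \in G `\` A & touches b (last x p)) ->
  exists z, (exists2 a, a \in A & touches a z) /\ (exists2 b, b \in G `\` A & touches b z).
Proof.
elim: p x => [|y p IH] x hA /=; first by move=> _ hB; exists x.
move=> /andP[xy hp] hB.
case: (boolP (mkedge x y \in A)) => xyA.
  by apply: IH hp hB; exists (mkedge x y) => //; apply: touch_mk2.
exists x; split => //; exists (mkedge x y); first by rewrite in_fsetD xyA.
exact: touch_mk1.
Qed.

Lemma fsetUD_sub (A G : graph) : A `<=` G -> A `|` (G `\` A) = G.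
Proof.
move=> /fsubsetP s; apply/fsetP => e; rewrite in_fsetU in_fsetD.
by case: (boolP (e \in A)) => // /s ->.
Qed.

Lemma fsetID_sub (A G : graph) : A `&` (G `\` A) = fset0.
Proof. by apply/fsetP => e; rewrite in_fsetI in_fsetD in_fset0; case: (e \in A). Qed.

Lemma del_del G z X : del (del G [fset z]) X = del G (z |` X).
Proof.
apply/fsetP => e; rewrite !mem_del !in_fset1U !in_fset1 !negb_or.
by case: (e \in G); case: (e.1 == z); case: (e.2 == z); case: (e.1 \in X); case: (e.2 \in X).
Qed.

Lemma setDD (V : {fset nat}) z X : (V `\ z) `\` X = V `\` (z |` X).
Proof.
by apply/fsetP => u; rewrite !in_fsetD in_fset1 in_fset1U negb_or; case: (u == z); case: (u \in X).
Qed.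

Lemma verts_del1 G z : wf_graph G -> (forall u, u \in verts G -> 2 <= deg G u) ->
  verts (del G [fset z]) = verts G `\ z.
Proof.
move=> wG h2; apply/eqP; rewrite eqEfsubset verts_del /=.
apply/fsubsetP => u; rewrite in_fsetD1 => /andP[uz uV].
have : ~~ (starG G u `<=` [fset (minn u z, maxn u z)]).
  apply/negP => /fsubset_leq_card; rewrite cardfs1 -degE; have := h2 u uV; lia.
move=> /fsubsetPn[e]; rewrite mem_starG => /andP[eG eu] ne.
have ez : ~~ touches e z.
  by apply/negP => ez; move: ne; rewrite (edge_eq (wG e eG) eu ez uz) fset11.
apply/in_vertsP; exists e => //; rewrite mem_del eG !in_fset1.
by move: ez; rewrite /touches negb_or.
Qed.


Lemma touch_e1 (e : edge) : touches e e.1.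
Proof. by rewrite /touches eqxx. Qed.

Lemma del0 G : del G fset0 = G.
Proof. by apply/fsetP => e; rewrite mem_del !in_fset0 andbT. Qed.

Section Ar.
Local Close Scope fset_scope.
Lemma ar1 n m b k t : n = b + m -> b = 1 -> k.+1 + t <= n -> t <= m.
Proof. lia. Qed.

Lemma ar_main k d rA rB rA' rB' rG rG' jA jB D :
  0 < d -> 0 < jA -> 0 < jB -> d + k.+1 <= D -> D <= jA + jB ->
  rA' + minn d jA <= rA -> rB' + minn d jB <= rB -> jA <= rA -> jB <= rB ->
  rG = rG' + d -> minn k (minn rA' rB') + rG' <= rA' + rB' ->
  minn k.+1 (minn rA rB) + rG <= rA + rB.
Proof. lia. Qed.
End Ar.

Section Main.
Variable M : graph_matroid_family.
Notation rk := (r M).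
Variables (d t : nat).
Hypothesis hmin : forall C, is_circuit M C -> mindeg_ge C d.+1.
Hypothesis hdt : d < t.
Hypothesis hd1 : 0 < d.
Hypothesis hstep : forall W z, z \notin W -> t <= #|` W| ->
  rk (complete (z |` W)) = (rk (complete W) + d)%N.

Lemma trivial_bound G A : wf_graph G -> A `<=` G -> rk G <= rk A + rk (G `\` A).
Proof.
move=> wG sA; have := r_sub M (wf_sub wG sA) (wf_sub wG (fsubsetDl G A)).
by rewrite fsetUD_sub // fsetID_sub r0 addn0.
Qed.

Lemma main_ind k : forall G, wf_graph G -> k_connected G k -> vredundantly_rigid M G k ->
  k + t <= #|` verts G| -> forall A, A `<=` G ->
  minn k (minn (rk A) (rk (G `\` A))) + rk G <= rk A + rk (G `\` A).
Proof.
elim: k => [|k IH] G wG kc vr hsz A sA.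
  by rewrite min0n add0n; apply: trivial_bound.
have tb := trivial_bound wG sA.
have [A0|[a aA]] := fset_0Vmem A.
  by rewrite A0 fsetD0 r0 min0n.
have [B0|[b bB]] := fset_0Vmem (G `\` A).
  by rewrite B0 r0 !minn0; rewrite B0 r0 in tb; lia.
have aG : a \in G := fsubsetP sA a aA.
have bG : b \in G by move: bB; rewrite in_fsetD => /andP[].
have [z [[a' a'A a'z] [b' b'B b'z]]] : exists z, (exists2 a, a \in A & touches a z) /\
    (exists2 b, b \in G `\` A & touches b z).
  case: kc => _ /(_ fset0 (fsub0set _) isT).
  rewrite fsetD0 del0 => /(_ a.1 b.1 (in_verts aG (touch_e1 a)) (in_verts bG (touch_e1 b))).
  move=> [p /andP[hp /eqP hl]].
  apply: (mixed_path (x := a.1) (p := p)) => //; first by exists a => //; apply: touch_e1.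
  by exists b => //; rewrite hl; apply: touch_e1.
have a'G : a' \in G := fsubsetP sA a' a'A.
have b'G : b' \in G by move: b'B; rewrite in_fsetD => /andP[].
have zV : z \in verts G := in_verts a'G a'z.
case: (vr) => rG vr2.
have hdeg := deg_redundant hmin hdt hd1 wG vr2 hsz zV.
have deg2 : forall u, u \in verts G -> 2 <= deg G u.
  move=> u uV; apply: leq_trans (deg_redundant hmin hdt hd1 wG vr2 hsz uV).
  by rewrite addnS ltnS; apply: leq_trans hd1 (leq_addr _ _).
pose G' := del G [fset z].
have wG' : wf_graph G' := wf_sub wG (del_sub _ _).
have vG' : verts G' = verts G `\ z := verts_del1 z wG deg2.
have cV' : #|` verts G'| = (#|` verts G|).-1 by rewrite vG' (cardfsD1 z (verts G)) zV.
have sub1 : forall X, X `<=` verts G' -> z |` X `<=` verts G.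
  move=> X; rewrite vG' => /fsubsetP sX; apply/fsubsetP => x; rewrite in_fset1U => /orP[/eqP->//|/sX].
  by rewrite in_fsetD1 => /andP[].
have card1 : forall X : {fset nat}, #|` z |` X| <= (#|` X|).+1.
  by move=> X; rewrite cardfsU1; case: (z \in X).
have kc' : k_connected G' k.
  case: kc => kV kc2; split; first by rewrite cV' -ltnS (ltn_predK kV).
  move=> X sX cX; rewrite vG' setDD del_del; apply: kc2 (sub1 X sX) _.
  by apply: leq_ltn_trans (card1 X) _.
have vr' : vredundantly_rigid M G' k.
  split.
    rewrite /rigid vG'; have := vr2 [fset z]; rewrite fsub1set zV cardfs1 => /(_ isT isT).
    by rewrite /G' /rigid_on.
  move=> X sX cX; rewrite vG' setDD del_del; apply: vr2 (sub1 X sX) _.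
  by apply: leq_trans (card1 X) _.
have hsz' : k + t <= #|` verts G'|.
  by rewrite cV' -ltnS (ltn_predK (m := 0)) ?(leq_trans _ hsz) // -addSn.
pose A' := A `&` G'.
have sA' : A' `<=` G' := fsubsetIr _ _.
have IHa := IH G' wG' kc' vr' hsz' A' sA'.
pose SA := starG A z.
pose SB := starG (G `\` A) z.
have EA : A = A' `|` SA.
  apply/fsetP => e; rewrite in_fsetU in_fsetI mem_starG mem_del !in_fset1 /touches.
  case: (boolP (e \in A)) => //= eA; rewrite (fsubsetP sA e eA) /=.
  by case: (e.1 == z); case: (e.2 == z).
have EB : G `\` A = (G' `\` A') `|` SB.
  apply/fsetP => e; rewrite in_fsetU !in_fsetD in_fsetI mem_starG in_fsetD mem_del !in_fset1 /touches.
  case: (e \in A); case: (e \in G); case: (e.1 == z); case: (e.2 == z) => //.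
have wA : wf_graph A := wf_sub wG sA.
have wB : wf_graph (G `\` A) := wf_sub wG (fsubsetDl _ _).
have zA' : z \notin verts A'.
  apply/negP => /(fsubsetP (verts_sub sA')); rewrite vG' in_fsetD1 eqxx //.
have zB' : z \notin verts (G' `\` A').
  apply/negP => /(fsubsetP (verts_sub (fsubsetDl G' A'))); rewrite vG' in_fsetD1 eqxx //.
have tA : forall e, e \in SA -> touches e z by move=> e; rewrite mem_starG => /andP[].
have tB : forall e, e \in SB -> touches e z by move=> e; rewrite mem_starG => /andP[].
have f1A := F1 hmin (H := A') (S := SA) (z := z).
rewrite -EA in f1A; have {}f1A := f1A wA zA' tA.
have f1B := F1 hmin (H := G' `\` A') (S := SB) (z := z).
rewrite -EB in f1B; have {}f1B := f1B wB zB' tB.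
have iA : rk SA = #|` SA| := star_indep hmin hd1 (wf_sub wA (fset_sub _ _)) tA.
have iB : rk SB = #|` SB| := star_indep hmin hd1 (wf_sub wB (fset_sub _ _)) tB.
have mA : rk SA <= rk A := r_mono M wA (fset_sub _ _).
have mB : rk SB <= rk (G `\` A) := r_mono M wB (fset_sub _ _).
have jA : 0 < #|` SA| by rewrite cardfs_gt0; apply/fset0Pn; exists a'; rewrite mem_starG a'A.
have jB : 0 < #|` SB| by rewrite cardfs_gt0; apply/fset0Pn; exists b'; rewrite mem_starG b'B.
have jAB : deg G z <= #|` SA| + #|` SB|.
  rewrite degE; apply: leq_trans (_ : #|` SA `|` SB| <= _); last by rewrite -cardfsUI leq_addr.
  apply: fsubset_leq_card; apply/fsubsetP => e; rewrite mem_starG in_fsetU !mem_starG in_fsetD.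
  by case/andP => -> ->; case: (e \in A).
have rGG : rk G = (rk G' + d)%N.
  have h1 : rk G = rk (complete (verts G)) := rG.
  have := vr2 [fset z]; rewrite fsub1set zV cardfs1 => /(_ isT isT); rewrite /rigid_on -/G' => h2.
  rewrite h1 h2 -(hstep (z := z) (W := verts G `\ z)) ?fsetD1K //; first by rewrite in_fsetD1 eqxx.
  by apply: (ar1 (cardfsD1 z (verts G)) _ hsz); rewrite zV.
have jA' : #|` SA| <= rk A by rewrite -iA.
have jB' : #|` SB| <= rk (G `\` A) by rewrite -iB.
exact: (ar_main hd1 jA jB hdeg jAB f1A f1B jA' jB' rGG IHa).
Qed.

End Main.


Section Ar2.
Local Close Scope fset_scope.
Lemma ar_fin k k' a b g : 0 < k' -> k' < k.+1 -> k' <= a -> k' <= b ->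
  a + b <= g + k' - 1 -> minn k (minn a b) + g <= a + b -> False.
Proof. lia. Qed.
Lemma ar_deg d k D : 0 < d -> d + k <= D -> k.+1 <= D.
Proof. lia. Qed.
End Ar2.

Definition iset n : {fset nat} := [fset i in iota 0 n].

Lemma iset_mem n i : (i \in iset n) = (i < n).
Proof. by rewrite /iset in_fset mem_iota. Qed.

Lemma iset_S n : iset n.+1 = n |` iset n.
Proof. by apply/fsetP => i; rewrite in_fset1U !iset_mem ltnS leq_eqVlt. Qed.

Lemma iset_notin n : n \notin iset n.
Proof. by rewrite iset_mem ltnn. Qed.

Lemma card_iset n : #|` iset n| = n.
Proof. by rewrite /iset card_fseq undup_id ?iota_uniq // size_iota. Qed.

Lemma iset_sub m n : m <= n -> iset m `<=` iset n.
Proof.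
move=> mn; apply/fsubsetP => i; rewrite !iset_mem => im.
exact: leq_trans im mn.
Qed.

Theorem proposition3p6 (M : graph_matroid_family) (G : graph) (k d t : nat) :
  wf_graph G ->
  nontrivial M -> unbounded M ->
  is_dimensionality M d -> is_threshold M d t ->
  k_connected G k -> vredundantly_rigid M G k ->
  k + t <= #|` verts G | ->
  vertically_connected M G k.+1.
Proof.
move=> wG _ unb [_ hmin] [[C0 [hC [_ [c cV hcd]] hvc]] _] kc vr hsz.
have hdt : d < t := t_ge hC hcd hvc.
have hstep : forall W z, z \notin W -> t <= #|` W| ->
    r M (complete (z |` W)) = (r M (complete W) + d)%N.
  move=> W z zW tW; apply/eqP; rewrite eqn_leq (F2_upper hC hcd hvc zW tW) /=.
  by apply: (F2_lower hmin zW); apply: leq_trans (ltnW hdt) tW.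
have hd1 : 0 < d.
  rewrite lt0n; apply/negP => /eqP d0.
  have bnd : forall n, r M (Kn n) <= r M (Kn t).
    elim=> [|n IHn].
      by apply: r_mono; [exact: wf_complete | apply: complete_sub; apply: iset_sub].
    case: (leqP t n) => tn.
      rewrite /Kn -/(iset n.+1) iset_S hstep ?iset_notin ?card_iset // d0 addn0.
      exact: IHn.
    by apply: r_mono; [exact: wf_complete | apply: complete_sub; apply: iset_sub].
  have [n hn] := unb (r M (Kn t)).+1.
  by have := bnd n; lia.
split.
  have [z zV] : exists z, z \in verts G.
    by apply/fset0Pn; rewrite -cardfs_gt0; case: kc => h _; apply: leq_ltn_trans h.
  case: vr => _ vr2.
  have hdeg := deg_redundant hmin hdt hd1 wG vr2 hsz zV.
  have wS : wf_graph (starG G z) := wf_sub wG (fset_sub _ _).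
  have iS := star_indep hmin hd1 wS (z := z) (fun e => ltac:(rewrite mem_starG => /andP[]; done)).
  have := r_mono M wG (fset_sub _ _ : starG G z `<=` G).
  rewrite iS -degE /r => h; apply: leq_trans h; exact: ar_deg hd1 hdeg.
move=> k' k'0 k'k E1 E2 [hU hI h1 h2 h3].
have s1 : E1 `<=` G by rewrite -hU fsubsetUl.
have E2E : E2 = G `\` E1.
  apply/fsetP => e; rewrite -hU in_fsetD in_fsetU.
  move/fsetP: hI => /(_ e); rewrite in_fsetI in_fset0.
  by case: (e \in E1); case: (e \in E2).
have s2 : E2 `<=` G by rewrite -hU fsubsetUr.
rewrite -(rE M wG s1) -(rE M wG s2) in h1 h2 h3.
have := main_ind hmin hdt hd1 hstep wG kc vr hsz s1.
rewrite -E2E => h.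
exact: (ar_fin k'0 k'k h1 h2 h3 h).
Qed.
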